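(* Let $P$ be a poset and $e:P\to L$ a join-completion of $P$. Then $(\mathcal{U}_e)^-$ is maximal.
   Context: A join-completion of $P$ is an order embedding $e:P\to L$ into a complete lattice with every $x\in L$ equal to $\bigvee\{e(p):e(p)\le x\}$. $\Gamma_e$ is the standard closure operator on $P$ whose closed sets are the sets $e^{-1}(x^\downarrow)$, $x\in L$, and $\mathcal{U}_e=\{S\subseteq P:\bigvee S\text{ exists in }P\text{ and }\bigvee S\in\Gamma_e(S)\}$. A join-specification for $P$ is a set $\mathcal{U}\subseteq\wp(P)$ such that $\bigvee S$ exists for every $S\in\mathcal{U}$ and $\{p\}\in\mathcal{U}$ for all $p$. A $\mathcal{U}$-ideal is a down-closed $C$ with $\bigvee S\in C$ whenever $S\in\mathcal{U}$, $S\subseteq C$; $\mathcal{I}_{\mathcal{U}}$ is the lattice of $\mathcal{U}$-ideals; $\Gamma_{\mathcal{U}}(S)$ the smallest $\mathcal{U}$-ideal containing $S$; $\mathcal{U}^+=\{S:\bigvee S\text{ exists and }\bigvee S\in\Gamma_{\mathcal{U}}(S)\}$; $\mathcal{U}$ is maximal if $\mathcal{U}=\mathcal{U}^+$ and frame-generating if $\mathcal{I}_{\mathcal{U}}$ is a frame. For a join-specification $\mathcal{V}$, $\mathcal{V}^-$ denotes the largest frame-generating join-specification contained in $\mathcal{V}$ (which exists). *)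

(* Defs.v *)
Section Defs.

Definition is_partial_order {T : Type} (le : T -> T -> Prop) : Prop :=
  (forall x, le x x) /\
  (forall x y, le x y -> le y x -> x = y) /\
  (forall x y z, le x y -> le y z -> le x z).

Definition is_lub {T : Type} (le : T -> T -> Prop) (S : T -> Prop) (x : T) : Prop :=
  (forall s, S s -> le s x) /\
  (forall y, (forall s, S s -> le s y) -> le x y).

Definition is_complete_lattice {T : Type} (le : T -> T -> Prop) : Prop :=
  is_partial_order le /\ forall S : T -> Prop, exists x, is_lub le S x.

Definition subset {T : Type} (A B : T -> Prop) : Prop := forall x, A x -> B x.

Definition down_closed {T : Type} (le : T -> T -> Prop) (C : T -> Prop) : Prop :=
  forall x y, le x y -> C y -> C x.

Definition order_embedding {P L : Type} (leP : P -> P -> Prop)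
  (leL : L -> L -> Prop) (e : P -> L) : Prop :=
  forall p q, leP p q <-> leL (e p) (e q).

Definition join_completion {P L : Type} (leP : P -> P -> Prop)
  (leL : L -> L -> Prop) (e : P -> L) : Prop :=
  is_complete_lattice leL /\ order_embedding leP leL e /\
  forall x : L, is_lub leL (fun y => exists p, y = e p /\ leL (e p) x) x.

(* Gamma_e: the closure operator on P whose closed sets are e^{-1}(x^down),
   x in L: Gamma_e(S) is the intersection of all closed sets containing S. *)
Definition Gamma_e {P L : Type} (leL : L -> L -> Prop) (e : P -> L)
  (S : P -> Prop) : P -> Prop :=
  fun p => forall x : L, (forall s, S s -> leL (e s) x) -> leL (e p) x.

Definition U_e {P L : Type} (leP : P -> P -> Prop) (leL : L -> L -> Prop)
  (e : P -> L) : (P -> Prop) -> Prop :=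
  fun S => exists j, is_lub leP S j /\ Gamma_e leL e S j.

Definition join_spec {P : Type} (leP : P -> P -> Prop)
  (U : (P -> Prop) -> Prop) : Prop :=
  (forall S, U S -> exists j, is_lub leP S j) /\
  (forall p, U (fun q => q = p)).

Definition U_ideal {P : Type} (leP : P -> P -> Prop)
  (U : (P -> Prop) -> Prop) (C : P -> Prop) : Prop :=
  down_closed leP C /\
  forall S, U S -> subset S C -> forall j, is_lub leP S j -> C j.

Definition Gamma_U {P : Type} (leP : P -> P -> Prop)
  (U : (P -> Prop) -> Prop) (S : P -> Prop) : P -> Prop :=
  fun p => forall C, U_ideal leP U C -> subset S C -> C p.

Definition U_plus {P : Type} (leP : P -> P -> Prop)
  (U : (P -> Prop) -> Prop) : (P -> Prop) -> Prop :=
  fun S => exists j, is_lub leP S j /\ Gamma_U leP U S j.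

Definition maximal_spec {P : Type} (leP : P -> P -> Prop)
  (U : (P -> Prop) -> Prop) : Prop :=
  forall S, U S <-> U_plus leP U S.

(* I_U is a frame.  In the complete lattice I_U (ordered by inclusion) the
   meet of two ideals is their intersection and the join of a family B of
   ideals is Gamma_U of their union; the frame law is
     A /\ \/B = \/ { A /\ b | b in B }. *)
Definition frame_generating {P : Type} (leP : P -> P -> Prop)
  (U : (P -> Prop) -> Prop) : Prop :=
  forall (A : P -> Prop) (B : (P -> Prop) -> Prop),
    U_ideal leP U A -> (forall b, B b -> U_ideal leP U b) ->
    forall p,
      (A p /\ Gamma_U leP U (fun q => exists b, B b /\ b q) p) <->
      Gamma_U leP U (fun q => exists b, B b /\ A q /\ b q) p.

Definition is_minus {P : Type} (leP : P -> P -> Prop)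
  (V W : (P -> Prop) -> Prop) : Prop :=
  join_spec leP W /\ frame_generating leP W /\ subset W V /\
  forall W', join_spec leP W' -> frame_generating leP W' -> subset W' V ->
    subset W' W.

End Defs.

(* Main.v *)
Require Import Defs.
From Stdlib Require Import Setoid.

Lemma lub_uniq {P : Type} (leP : P -> P -> Prop) (HP : is_partial_order leP)
  S j j' : is_lub leP S j -> is_lub leP S j' -> j = j'.
Proof.
  intros [H1 H2] [H1' H2']. destruct HP as [_ [Ha _]].
  apply Ha; [apply H2; exact H1' | apply H2'; exact H1].
Qed.

Lemma W_sub_plus {P : Type} (leP : P -> P -> Prop) W :
  join_spec leP W -> forall S, W S -> U_plus leP W S.
Proof.
  intros [Hj _] S HS. destruct (Hj S HS) as [j Hl].
  exists j; split; [exact Hl|].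
  intros C [_ HC] Hsub. exact (HC S HS Hsub j Hl).
Qed.

Lemma ideal_equiv {P : Type} (leP : P -> P -> Prop) (HP : is_partial_order leP) W :
  join_spec leP W -> forall C, U_ideal leP (U_plus leP W) C <-> U_ideal leP W C.
Proof.
  intros HW C; split.
  - intros [Hd HC]; split; [exact Hd|].
    intros S HS. apply HC. apply W_sub_plus; assumption.
  - intros [Hd HC]; split; [exact Hd|].
    intros S [j' [Hl' HG]] Hsub j Hl.
    rewrite (lub_uniq leP HP S j j' Hl Hl').
    apply HG; [split; assumption | exact Hsub].
Qed.

Lemma gamma_equiv {P : Type} (leP : P -> P -> Prop) (HP : is_partial_order leP) W :
  join_spec leP W -> forall S p, Gamma_U leP (U_plus leP W) S p <-> Gamma_U leP W S p.
Proof.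
  intros HW S p; split; intros H C HC Hs; apply H; auto;
  apply (ideal_equiv leP HP W HW); assumption.
Qed.

Theorem lemma5p4 (P : Type) (leP : P -> P -> Prop) (L : Type)
  (leL : L -> L -> Prop) (e : P -> L)
  (HP : is_partial_order leP) (He : join_completion leP leL e)
  (W : (P -> Prop) -> Prop) (HW : is_minus leP (U_e leP leL e) W) :
  maximal_spec leP W.
Proof.
  destruct HW as [Hjs [Hfr [Hsub Hmax]]].
  intros S; split.
  - apply W_sub_plus; assumption.
  - intros HS. apply (Hmax (U_plus leP W)); [| | | exact HS].
    + split.
      * intros T [j [Hl _]]. exists j; exact Hl.
      * intros p. apply W_sub_plus; [assumption|]. apply Hjs.
    + intros A B HA HB p.
      rewrite !(gamma_equiv leP HP W Hjs).
      apply Hfr.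
      * apply (ideal_equiv leP HP W Hjs); assumption.
      * intros b Hb. apply (ideal_equiv leP HP W Hjs); auto.
    + intros T [j [Hl HG]]. exists j; split; [exact Hl|].
      intros x Hx.
      destruct He as [[[_ [_ HtrL]] _] [Hemb _]].
      set (C := fun p => leL (e p) x).
      apply (HG C).
      * split.
        -- intros a b Hab Hb. unfold C in *.
           apply (HtrL _ (e b)); [apply Hemb; exact Hab | exact Hb].
        -- intros T' HT' Hs' k Hk.
           destruct (Hsub T' HT') as [k' [Hk' HGk]].
           rewrite (lub_uniq leP HP T' k k' Hk Hk').
           apply HGk. exact Hs'.
      * exact Hx.
Qed.
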